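(* The bound of Corollary 9 is optimal: there exist $n$-qubit unitary stabilizer circuits such that every equivalent unitary stabilizer circuit has $\Omega(n^2/\log n)$ gates.
   Context: A unitary stabilizer circuit is a circuit consisting only of CNOT, Hadamard and phase ($\mathrm{diag}(1,i)$) gates, each gate acting on specified qubits among $n$. Two such circuits are equivalent if the unitaries they implement agree up to a global phase. Corollary 9 states that every $n$-qubit unitary stabilizer circuit has an equivalent one with $O(n^2/\log n)$ gates. *)

(* Defs.v *)
From HB Require Import structures.
From mathcomp Require Import all_boot all_order all_algebra all_field.
Set Implicit Arguments. Unset Strict Implicit. Unset Printing Implicit Defensive.
Import Order.TTheory GRing.Theory Num.Theory.
Local Open Scope ring_scope.

(* Computational basis of n qubits: basis states indexed by 'I_(2^n);
   qubit k of basis index i is bit k of i (little endian). *)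
Definition qbit (n : nat) (i : 'I_(2 ^ n)) (k : 'I_n) : bool :=
  odd (i %/ 2 ^ k).

Inductive gate (n : nat) : Type :=
| CNOT of 'I_n & 'I_n   (* control, target *)
| Had of 'I_n
| Phase of 'I_n.

Definition gate_wf (n : nat) (g : gate n) : bool :=
  if g is CNOT a b then a != b else true.

Definition circuit (n : nat) := seq (gate n).

Definition circuit_wf (n : nat) (C : circuit n) : bool := all (@gate_wf n) C.

Definition gate_mx (n : nat) (g : gate n) : 'M[algC]_(2 ^ n) :=
  match g with
  | CNOT a b => \matrix_(r, c)
      (if [forall k, qbit r k == (if k == b then qbit c b (+) qbit c a
                                  else qbit c k)] then 1 else 0)
  | Had a => \matrix_(r, c)
      (if [forall k, (k != a) ==> (qbit r k == qbit c k)]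
       then (sqrtC 2)^-1 * (if qbit r a && qbit c a then -1 else 1)
       else 0)
  | Phase a => \matrix_(r, c)
      (if r == c then (if qbit r a then 'i else 1) else 0)
  end.

(* Unitary implemented by a circuit: gates applied in sequence order,
   the first gate of the list is applied first. *)
Definition circuit_mx (n : nat) (C : circuit n) : 'M[algC]_(2 ^ n) :=
  foldl (fun U g => gate_mx g *m U) 1%:M C.

Definition equiv_circ (n : nat) (C D : circuit n) : Prop :=
  exists z : algC, `|z| = 1 /\ circuit_mx C = z *: circuit_mx D.

(* Main.v *)
Require Import Defs.
From HB Require Import structures.
From mathcomp Require Import all_boot all_order all_algebra all_field.
From mathcomp Require Import zify lra.
From Stdlib Require Import Classical ClassicalEpsilon.
Import Order.TTheory GRing.Theory Num.Theory.
Set Implicit Arguments. Unset Strict Implicit. Unset Printing Implicit Defensive.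

Lemma bits_nat_inj (n i j : nat) : (i < 2 ^ n)%N -> (j < 2 ^ n)%N ->
  (forall k, (k < n)%N -> odd (i %/ 2 ^ k) = odd (j %/ 2 ^ k)) -> i = j.
Proof.
elim: n i j => [|n IH] i j.
  by rewrite expn0 !ltnS !leqn0 => /eqP-> /eqP->.
move=> hi hj H.
have h0 := H 0%N (ltn0Sn _); rewrite expn0 !divn1 in h0.
have hh : i./2 = j./2.
  apply: IH.
  - rewrite -divn2; rewrite ltn_divLR // -expnSr //.
  - rewrite -divn2; rewrite ltn_divLR // -expnSr //.
  move=> k hk; have := H k.+1 hk.
  by rewrite -!divn2 -!divnMA expnS mulnC.
by rewrite -(odd_double_half i) -(odd_double_half j) h0 hh.
Qed.

Definition bits n (i : 'I_(2 ^ n)) : {ffun 'I_n -> bool} := [ffun k => qbit i k].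
Arguments bits {n} i.

Lemma bits_inj n : injective (@bits n).
Proof.
move=> i j /ffunP H; apply: ord_inj; apply: (@bits_nat_inj n); rewrite ?ltn_ord //.
move=> k hk; have := H (Ordinal hk); by rewrite !ffunE.
Qed.


Lemma bits_onto n (v : {ffun 'I_n -> bool}) : exists i, bits i = v.
Proof.
have H := @inj_card_onto _ _ (@bits n) (@bits_inj n).
have : v \in codom (@bits n).
  apply: H; by rewrite card_ffun card_bool !card_ord.
by move/codomP=> [i ->]; exists i.
Qed.

Local Open Scope ring_scope.

Definition mx_of n (F : {ffun 'I_n -> bool} -> {ffun 'I_n -> bool}) : 'M[algC]_(2 ^ n) :=
  \matrix_(r, c) ((bits r == F (bits c))%:R).

Lemma mx_ofM n G F : @mx_of n G *m mx_of F = mx_of (G \o F).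
Proof.
apply/matrixP=> r c; rewrite !mxE.
have [s0 hs0] := bits_onto (F (bits c)).
rewrite (bigD1 s0) //= !mxE hs0 eqxx mulr1 big1 ?addr0 //.
move=> s hs; rewrite !mxE -hs0 (inj_eq (@bits_inj n)) (negbTE hs) mulr0 //.
Qed.

Lemma mx_of_id n : (1%:M : 'M[algC]_(2 ^ n)) = mx_of id.
Proof.
apply/matrixP=> r c; rewrite !mxE (inj_eq (@bits_inj n)) //.
Qed.

Definition cnotf n (a b : 'I_n) (v : {ffun 'I_n -> bool}) : {ffun 'I_n -> bool} :=
  [ffun k => if k == b then v b (+) v a else v k].

Lemma gate_mx_cnot n (a b : 'I_n) : gate_mx (CNOT a b) = mx_of (cnotf a b).
Proof.
apply/matrixP=> r c; rewrite !mxE /=.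
set P := [forall k, _].
have -> : P = (bits r == cnotf a b (bits c)); last by case: (_ == _).
apply/forallP/eqP.
  move=> H; apply/ffunP=> k; have /eqP := H k; by rewrite !ffunE.
move=> H k; apply/eqP; have := congr1 (fun f : {ffun 'I_n -> bool} => f k) H; by rewrite !ffunE.
Qed.


Definition isCNOT n (g : gate n) : bool := if g is CNOT _ _ then true else false.
Definition gfun n (g : gate n) v := if g is CNOT a b then cnotf a b v else v.
Definition applyC n (C : circuit n) v := foldl (fun v g => gfun g v) v C.

Lemma circ_cnot n (C : circuit n) F : all (@isCNOT n) C ->
  foldl (fun U g => gate_mx g *m U) (mx_of F) C = mx_of (fun v => applyC C (F v)).
Proof.
elim: C F => [|g C IH] F //= /andP [hg hC].
case: g hg => // a b _.
by rewrite gate_mx_cnot mx_ofM IH.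
Qed.

Lemma circuit_mx_cnot n (C : circuit n) : all (@isCNOT n) C ->
  circuit_mx C = mx_of (applyC C).
Proof. by move=> h; rewrite /circuit_mx mx_of_id circ_cnot. Qed.

Section Q.
Variable n : nat.
Let m := (n %/ 2)%N.
Lemma xq_proof (i : 'I_m) : (i < n)%N.
Proof. have := ltn_ord i; rewrite /m; lia. Qed.
Lemma yq_proof (j : 'I_m) : (m + j < n)%N.
Proof. have := ltn_ord j; rewrite /m; lia. Qed.
Definition xq (i : 'I_m) : 'I_n := Ordinal (xq_proof i).
Definition yq (j : 'I_m) : 'I_n := Ordinal (yq_proof j).
Lemma xq_yq i j : (xq i == yq j) = false.
Proof. apply/negbTE; rewrite /xq /yq -val_eqE /=; have := ltn_ord i; rewrite /m; lia. Qed.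
Lemma yq_inj : injective yq.
Proof. move=> i j /(congr1 val) /= h; apply: ord_inj; lia. Qed.

Definition circB (B : {ffun 'I_m * 'I_m -> bool}) : circuit n :=
  [seq CNOT (xq p.1) (yq p.2) | p <- enum [pred p | B p]].

Lemma circB_wf B : circuit_wf (circB B).
Proof. rewrite /circuit_wf /circB all_map; apply/allP=> p _ /=; by rewrite xq_yq. Qed.
Lemma circB_cnot B : all (@isCNOT n) (circB B).
Proof. rewrite /circB all_map; by apply/allP. Qed.

Lemma apply_pairs (s : seq ('I_m * 'I_m)) v :
  let w := applyC [seq CNOT (xq p.1) (yq p.2) | p <- s] v in
  (forall i, w (xq i) = v (xq i)) /\
  (forall j, w (yq j) = v (yq j) (+) odd (count [pred p | (p.2 == j) && v (xq p.1)] s)).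
Proof.
elim: s v => [|p s IH] v /=.
  split=> // j; by rewrite addbF.
have [IH1 IH2] := IH (cnotf (xq p.1) (yq p.2) v).
split.
  move=> i; by rewrite IH1 /cnotf ffunE xq_yq.
move=> j; rewrite IH2 /cnotf !ffunE (inj_eq yq_inj).
have E : count [pred p0 | (p0.2 == j) &&
     [ffun k => if k == yq p.2 then v (yq p.2) (+) v (xq p.1) else v k] (xq p0.1)] s
   = count [pred p | (p.2 == j) && v (xq p.1)] s.
  by apply: eq_count => q /=; rewrite ffunE xq_yq.
rewrite E /= oddD oddb.
case: (eqVneq j p.2) => [->|hne]; first by rewrite /= addbA.
by [].
Qed.
End Q.


Lemma xq_inj n : injective (@xq n).
Proof. move=> i j /(congr1 val) /= h; exact: ord_inj. Qed.

Lemma circB_out n (B : {ffun 'I_(n %/ 2) * 'I_(n %/ 2) -> bool}) i j :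
  applyC (circB B) [ffun k => k == xq i] (yq j) = B (i, j).
Proof.
have [_ H] := apply_pairs (enum [pred p | B p]) [ffun k => k == xq i].
rewrite /circB H ffunE eq_sym xq_yq /=.
have -> : count [pred p | (p.2 == j) && [ffun k => k == xq i] (xq p.1)]
     (enum [pred p | B p]) = count_mem (i, j) (enum [pred p | B p]).
  apply: eq_count => -[a b] /=; rewrite ffunE (inj_eq (@xq_inj n)).
  by rewrite xpair_eqE andbC.
by rewrite count_uniq_mem ?enum_uniq // mem_enum oddb.
Qed.

Lemma circB_distinct n (B1 B2 : {ffun 'I_(n %/ 2) * 'I_(n %/ 2) -> bool}) (z : algC) :
  circuit_mx (circB B1) = z *: circuit_mx (circB B2) -> B1 = B2.
Proof.
rewrite !circuit_mx_cnot ?circB_cnot // => H.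
apply/ffunP=> -[i j]; apply/eqP; apply: contraT => hne.
have [c hc] := bits_onto [ffun k => k == xq i].
have [r hr] := bits_onto (applyC (circB B1) (bits c)).
have := congr1 (fun M : 'M[algC]_(2 ^ n) => M r c) H.
rewrite !mxE hr eqxx.
have -> : (applyC (circB B1) (bits c) == applyC (circB B2) (bits c)) = false.
  apply/negbTE/eqP=> E; apply: (negP hne); apply/eqP.
  by rewrite -circB_out -(circB_out B2) -hc E.
by rewrite mulr0 => /eqP; rewrite oner_eq0.
Qed.


Section Count.
Variable n : nat.
Definition GT := ('I_n * 'I_n + ('I_n + 'I_n))%type.
Definition enc (g : gate n) : GT :=
  match g with CNOT a b => inl (a, b) | Had a => inr (inl a) | Phase a => inr (inr a) end.
Lemma enc_inj : injective enc.
Proof. by case=> [a b|a|a] [c d|c|c] //= [] -> //= ->. Qed.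

Definition code L (D : circuit n) : L.-tuple (option GT) :=
  [tuple nth None [seq Some (enc g) | g <- D] i | i < L].

Lemma nth_some_eq (X : Type) (s1 s2 : seq X) :
  (forall i, nth None (map Some s1) i = nth None (map Some s2) i) -> s1 = s2.
Proof.
elim: s1 s2 => [|x s1 IH] [|y s2] H //.
- by have := H 0%N.
- by have := H 0%N.
- have := H 0%N => /= -[->]; congr (_ :: _); apply: IH => i; exact: (H i.+1).
Qed.

Lemma code_inj L D1 D2 : (size D1 <= L)%N -> (size D2 <= L)%N ->
  code L D1 = code L D2 -> D1 = D2.
Proof.
move=> h1 h2 hc.
suff H : map enc D1 = map enc D2 by exact: (inj_map enc_inj H).
apply: nth_some_eq => i.
rewrite -!map_comp.
case: (ltnP i L) => hi.
  have := congr1 (fun t => tnth t (Ordinal hi)) hc; by rewrite !tnth_mktuple.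
by rewrite !nth_default // size_map; apply: leq_trans hi.
Qed.

Lemma card_code L : #|{: L.-tuple (option GT)}| = ((n.+1) ^ (2 * L))%N.
Proof.
rewrite card_tuple card_option card_sum card_prod card_sum !card_ord expnM.
congr (_ ^ _)%N; lia.
Qed.
End Count.


Lemma equiv_same n (C1 C2 D : circuit n) :
  equiv_circ C1 D -> equiv_circ C2 D -> exists z : algC, circuit_mx C1 = z *: circuit_mx C2.
Proof.
move=> [z1 [_ h1]] [z2 [hz2 h2]].
have nz : z2 != 0 by rewrite -normr_eq0 hz2 oner_eq0.
exists (z1 / z2); rewrite h1 h2 scalerA -mulrA mulVf // mulr1 //.
Qed.

Lemma exists_hard n : exists B : {ffun 'I_(n %/ 2) * 'I_(n %/ 2) -> bool},
  forall D, equiv_circ (circB B) D ->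
    ((n %/ 2) * (n %/ 2) <= 2 * size D * (trunc_log 2 n).+1)%N.
Proof.
set m := (n %/ 2)%N; set t := trunc_log 2 n.
apply: NNPP => hno.
have hB : forall B : {ffun 'I_m * 'I_m -> bool}, exists D,
    equiv_circ (circB B) D /\ (2 * size D * t.+1 < m * m)%N.
  move=> B; apply: NNPP => hn; apply: hno; exists B => D he.
  rewrite leqNgt; apply/negP=> hlt; apply: hn; by exists D.
pose Df B := proj1_sig (constructive_indefinite_description _ (hB B)).
have hDf B : equiv_circ (circB B) (Df B) /\ (2 * size (Df B) * t.+1 < m * m)%N.
  exact: proj2_sig (constructive_indefinite_description _ (hB B)).
have hcard : (0 < #|{: {ffun 'I_m * 'I_m -> bool}}|)%N.
  by rewrite card_ffun card_bool expn_gt0.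
have [B0 hL] := bigop.eq_bigmax (fun B => size (Df B)) hcard.
set L := (\max_B size (Df B))%N in hL.
have hsz B : (size (Df B) <= L)%N by exact: (@bigop.leq_bigmax _ (fun B => size (Df B)) B).
have inj : injective (fun B => @code n L (Df B)).
  move=> B1 B2 /code_inj => /(_ (hsz B1) (hsz B2)) E.
  have h2 := proj1 (hDf B2); rewrite -E in h2.
  have [z hz] := equiv_same (proj1 (hDf B1)) h2.
  exact: circB_distinct hz.
have := @leq_card _ _ _ inj.
rewrite card_code card_ffun card_bool card_prod !card_ord => hle.
have hn : (n.+1 <= 2 ^ t.+1)%N by apply: trunc_log_ltn.
have : (2 ^ (m * m) <= 2 ^ (t.+1 * (2 * L)))%N.
  apply: (leq_trans hle); have e : (2 ^ (t.+1 * (2*L)) = (2 ^ t.+1) ^ (2*L))%N by rewrite expnM.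
  rewrite e; elim: (2 * L)%N => // k IH; rewrite (expnS n.+1 k) (expnS (2 ^ t.+1) k); exact: leq_mul hn IH.
rewrite leq_exp2l // => hh.
have := proj2 (hDf B0); rewrite -hL; lia.
Qed.


Lemma arith n m s t : (2 <= n)%N -> m = (n %/ 2)%N -> (1 <= t)%N ->
  (m * m <= 2 * s * t.+1)%N -> (n ^ 2 <= 64 * (s * t))%N.
Proof.
move=> hn hm ht h.
have h1 : (n <= 2 * m + 1)%N by rewrite hm; lia.
have st : (s <= s * t)%N by rewrite leq_pmulr.
have h2 : (2 * s * t.+1 <= 4 * (s * t))%N.
  rewrite mulnS -mulnA; move: st; set u := (s * t)%N; lia.
have h4 : (n <= 4 * m)%N by rewrite hm; lia.
have h5 : (n * n <= 4 * m * (4 * m))%N by apply: leq_mul.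
have e : (4 * m * (4 * m) = 16 * (m * m))%N by rewrite mulnCA !mulnA.
rewrite e in h5; move: h h2 h5; rewrite expnS expn1.
set a := (m * m)%N; set u := (s * t)%N; set w := (n * n)%N; lia.
Qed.

Theorem mainTheorem11 :
  exists (c : rat) (N : nat), 0 < c /\ (2 <= N)%N /\
    forall n : nat, (N <= n)%N ->
      exists C : circuit n, circuit_wf C /\
        forall D : circuit n, circuit_wf D -> equiv_circ C D ->
          c * (n ^ 2)%:R <= (size D)%:R * (trunc_log 2 n)%:R.
Proof.
exists (1 / 64), 2%N; split; first by lra.
split => // n hn.
have [B hB] := exists_hard n.
exists (circB B); split; first exact: circB_wf.
move=> D _ he.
have ht : (1 <= trunc_log 2 n)%N by rewrite trunc_log_gt0.
have := @arith n _ _ _ hn erefl ht (hB D he).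
rewrite -(ler_nat rat) natrM => h.
rewrite -natrM.
move: h; set x := ((n ^ 2)%:R : rat); set y := (((size D) * trunc_log 2 n)%:R : rat).
move=> h; lra.
Qed.
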